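(* Let $X$ be a space and consider: (1) $\mathsf{EC}(X,\mathbb{R})$ holds; (2) $\mathsf{EC}(X,Y)$ holds for every metric space $Y$; (3a) $X$ satisfies $\mathsf{I0}$; (3b) the intersection of any two non-Lindelöf $0$-sets of $X$ is non-Lindelöf; (4a) $X$ satisfies $\mathsf{IC}$; (4b) the intersection of any two closed non-Lindelöf subsets of $X$ is non-Lindelöf. Then (1)$\Leftrightarrow$(2)$\Leftrightarrow$(3a)$\Leftarrow$(3b)$\Leftarrow$(4a)$\Leftrightarrow$(4b). Moreover, if $X$ is Tychonoff then (3a)$\Leftrightarrow$(3b), and if $X$ is normal then all six properties are equivalent.
   Context: All spaces are Hausdorff and maps continuous. For a non-Lindelöf space $X$ and a space $Y$, $\mathsf{EC}(X,Y)$ means: for every continuous $f:X\to Y$ there is a Lindelöf $Z\subset X$ such that $f(X\setminus Z)$ is a singleton (for Lindelöf $X$ the property is regarded as trivially true). A $0$-set of $X$ is a set $g^{-1}(\{0\})$ for some continuous $g:X\to[0,1]$. $X$ satisfies $\mathsf{IC}$ (resp. $\mathsf{I0}$) if of any two disjoint closed subsets (resp. $0$-sets) of $X$ at least one is Lindelöf. *)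

(* Defs.v *)
From HB Require Import structures.
From mathcomp Require Import all_boot all_order all_algebra.
From mathcomp Require Import all_classical all_reals all_analysis.
Set Implicit Arguments. Unset Strict Implicit. Unset Printing Implicit Defensive.
Import Order.TTheory GRing.Theory Num.Theory.
Import numFieldNormedType.Exports.
Local Open Scope classical_set_scope.
Local Open Scope ring_scope.

Definition lindelof {X : topologicalType} (A : set X) : Prop :=
  forall (I : Type) (U : I -> set X), (forall i, open (U i)) ->
    A `<=` \bigcup_(i in [set: I]) U i ->
    exists J : set I, countable J /\ A `<=` \bigcup_(i in J) U i.

Definition EC (X Y : topologicalType) : Prop :=
  lindelof [set: X] \/
  forall f : X -> Y, continuous f ->
    exists Z : set X, lindelof Z /\ exists y : Y, f @` (~` Z) = [set y].

Definition zero_set (R : realType) {X : topologicalType} (A : set X) : Prop :=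
  exists g : X -> R, continuous g /\ (forall x, 0 <= g x <= 1) /\
    A = g @^-1` [set 0].

Definition IC (X : topologicalType) : Prop :=
  forall A B : set X, closed A -> closed B -> A `&` B = set0 ->
    lindelof A \/ lindelof B.

Definition I0 (R : realType) (X : topologicalType) : Prop :=
  forall A B : set X, zero_set R A -> zero_set R B -> A `&` B = set0 ->
    lindelof A \/ lindelof B.

Definition zero_sets_meet_nonlindelof (R : realType) (X : topologicalType) :=
  forall A B : set X, zero_set R A -> zero_set R B ->
    ~ lindelof A -> ~ lindelof B -> ~ lindelof (A `&` B).

Definition closed_sets_meet_nonlindelof (X : topologicalType) :=
  forall A B : set X, closed A -> closed B ->
    ~ lindelof A -> ~ lindelof B -> ~ lindelof (A `&` B).

(* Metric space over R: a Hausdorff pseudometric space. *)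
Definition EC_all_metric (R : realType) (X : topologicalType) : Prop :=
  forall Y : pseudoMetricType R, hausdorff_space Y -> EC X Y.

Definition tychonoff_space (R : realType) (X : topologicalType) : Prop :=
  hausdorff_space X /\
  forall (x : X) (B : set X), closed B -> ~ B x ->
    exists f : X -> R, continuous f /\ (forall y, 0 <= f y <= 1) /\
      f x = 0 /\ (forall y, B y -> f y = 1).

(* Main.v *)
Require Import Defs.
From HB Require Import structures.
From mathcomp Require Import all_boot all_order all_algebra.
From mathcomp Require Import all_classical all_reals all_analysis.
From mathcomp Require Import lra.
Import numFieldNormedType.Exports.
Set Implicit Arguments. Unset Strict Implicit. Unset Printing Implicit Defensive.
Import Order.TTheory GRing.Theory Num.Theory.
Local Open Scope classical_set_scope.
Local Open Scope ring_scope.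

Lemma cnt_sub T (A B : set T) : A `<=` B -> countable B -> countable A.
Proof. by move=> AB; apply: sub_countable; apply: subset_card_le. Qed.

Lemma cnt_img T U (f : T -> U) (A : set T) : countable A -> countable (f @` A).
Proof. by apply: sub_countable; apply: card_image_le. Qed.

Lemma cnt_U T (A B : set T) : countable A -> countable B -> countable (A `|` B).
Proof.
move=> cA cB.
have -> : A `|` B = \bigcup_(i in [set: bool]) (if i then A else B).
  apply/seteqP; split => x.
    by case=> ?; [exists true|exists false].
  by case=> -[] _ ?; [left|right].
apply: bigcup_countable; first exact: countableP.
by case.
Qed.

Lemma lind0 (X : topologicalType) : lindelof (@set0 X).
Proof. by move=> I U _ _; exists set0; split; [exact: countable0|]. Qed.

Lemma lind_closed_sub (X : topologicalType) (Z A : set X) :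
  lindelof Z -> closed A -> A `<=` Z -> lindelof A.
Proof.
move=> LZ cA AZ I U oU AU.
pose V (o : option I) := if o is Some i then U i else ~` A.
have oV : forall o, open (V o).
  by case=> [i|] /=; [exact: oU| rewrite openC].
have [|J' [cJ' ZJ']] := LZ _ V oV.
  move=> x _; have [Ax|nAx] := pselect (A x).
    by have [i _ Ui] := AU x Ax; exists (Some i).
  by exists None.
exists (Some @^-1` J'); split.
  apply: sub_countable cJ'; apply: card_ge_preimage.
  by move=> a b _ _ [].
move=> x Ax; have [[i|] J'o Vo] := ZJ' x (AZ x Ax).
  by exists i.
by [].
Qed.

Lemma lind_bigcup (X : topologicalType) (K : Type) (D : set K) (F : K -> set X) :
  countable D -> (forall k, D k -> lindelof (F k)) ->
  lindelof (\bigcup_(k in D) F k).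
Proof.
move=> cD LF I U oU FU.
have H k : exists J : set I, D k -> countable J /\ F k `<=` \bigcup_(i in J) U i.
  have [Dk|nDk] := pselect (D k); last by exists set0.
  have [J [cJ FJ]] := LF k Dk I U oU (subset_trans (bigcup_sup Dk) FU).
  by exists J.
have [G HG] := choice H.
exists (\bigcup_(k in D) G k); split.
  by apply: bigcup_countable => // k Dk; case: (HG k Dk).
move=> x [k Dk Fkx]; have [_ /(_ x Fkx) [i Gi Ui]] := HG k Dk.
by exists i => //; exists k.
Qed.

Lemma lindU (X : topologicalType) (A B : set X) :
  lindelof A -> lindelof B -> lindelof (A `|` B).
Proof.
move=> LA LB.
have -> : A `|` B = \bigcup_(i in [set: bool]) (if i then A else B).
  apply/seteqP; split => x.
    by case=> ?; [exists true|exists false].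
  by case=> -[] _ ?; [left|right].
by apply: lind_bigcup; [exact: countableP| case].
Qed.



Lemma zero_set_closed (R : realType) (X : topologicalType) (A : set X) :
  zero_set R A -> closed A.
Proof.
move=> [g [cg [_ ->]]]; apply: preimage_closed; first by move=> x _; apply: cg.
exact: closed_eq.
Qed.

Lemma P1_I0 (R : realType) (X : topologicalType) : EC X R -> I0 R X.
Proof.
move=> [LT|EC] A B zA zB AB.
  by left; apply: lind_closed_sub LT (zero_set_closed zA) (subsetT _).
move: (zA) (zB) => [g [cg [g01 Ae]]] [h [ch [h01 Be]]].
have cf : continuous (fun x => g x - h x).
  by move=> x; apply: cvgB; [apply: cg|apply: ch].
have [Z [LZ [y fy]]] := EC _ cf.
have fZ x : ~ Z x -> g x - h x = y.
  by move=> nZ; have : [set y] (g x - h x) by rewrite -fy; exists x.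
have [y0|y0] := leP 0 y.
  left; apply: lind_closed_sub LZ (zero_set_closed zA) _ => x Ax.
  apply: contrapT => nZ; have := fZ x nZ.
  have gx0 : g x = 0 by move: Ax; rewrite Ae.
  have hx : h x != 0.
    apply/negP => /eqP hx0.
    have : (A `&` B) x by split => //; rewrite Be.
    by rewrite AB.
  have := h01 x; move: hx; rewrite gx0 => hx /andP[h0 _].
  have hp : 0 < h x by rewrite lt_neqAle eq_sym hx h0.
  lra.
right; apply: lind_closed_sub LZ (zero_set_closed zB) _ => x Bx.
apply: contrapT => nZ; have := fZ x nZ.
have hx0 : h x = 0 by move: Bx; rewrite Be.
have gx : g x != 0.
  apply/negP => /eqP gx0.
  have : (A `&` B) x by split => //; rewrite Ae.
  by rewrite AB.
have := g01 x; move: gx; rewrite hx0 => gx /andP[g0 _].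
have gp : 0 < g x by rewrite lt_neqAle eq_sym gx g0.
lra.
Qed.

Lemma P1_P3b (R : realType) (X : topologicalType) :
  EC X R -> zero_sets_meet_nonlindelof R X.
Proof.
move=> [LT|EC] A B zA zB nA nB LAB.
  by apply: nA; apply: lind_closed_sub LT (zero_set_closed zA) (subsetT _).
have key (C : set X) : zero_set R C -> ~ lindelof C ->
    exists Z, lindelof Z /\ ~` Z `<=` C.
  move=> zC nC; move: (zC) => [g [cg [g01 Ce]]].
  have [Z [LZ [c fc]]] := EC _ cg.
  have fZ x : ~ Z x -> g x = c.
    by move=> nZ; have : [set c] (g x) by rewrite -fc; exists x.
  have [c0|c0] := eqVneq c 0.
    exists Z; split => // x nZ; rewrite Ce /=; rewrite (fZ x nZ) c0 //.
  exfalso; apply: nC; apply: lind_closed_sub LZ (zero_set_closed zC) _.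
  move=> x Cx; apply: contrapT => nZ; move: (fZ x nZ) c0.
  by move: Cx; rewrite Ce /= => ->  <-; rewrite eqxx.
have [Z1 [L1 S1]] := key A zA nA.
have [Z2 [L2 S2]] := key B zB nB.
apply: nA; apply: lind_closed_sub (zero_set_closed zA) (subsetT _).
apply: lind_closed_sub (lindU (lindU L1 L2) LAB) closedT _.
move=> x _.
have [Z1x|nZ1x] := pselect (Z1 x); first by left; left.
have [Z2x|nZ2x] := pselect (Z2 x); first by left; right.
by right; split; [apply: S1|apply: S2].
Qed.

Lemma sepL (R : realType) (X Y : topologicalType) (f : X -> Y) (C D : set Y) :
  I0 R X -> normal_space Y -> continuous f -> closed C -> closed D ->
  C `&` D = set0 -> lindelof (f @^-1` C) \/ lindelof (f @^-1` D).
Proof.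
move=> HI nY cf cC cD CD.
have := (proj1 (@normal_separatorP R Y) nY) C D cC cD CD.
move=> /(@uniform_separatorP Y R) [p [cp rp pC pD]].
have p01 y : 0 <= p y <= 1.
  by have := rp (p y) (ex_intro2 _ _ y I erefl); rewrite /= in_itv.
have cpf : continuous (p \o f).
  by move=> x; apply: continuous_comp; [apply: cf|apply: cp].
have cqf : continuous (fun x => 1 - p (f x)).
  by move=> x; apply: cvgB; [apply: cvg_cst|apply: cpf].
have zA : zero_set R ((p \o f) @^-1` [set 0]).
  by exists (p \o f); split => //; split => // x; apply: p01.
have zB : zero_set R ((fun x => 1 - p (f x)) @^-1` [set 0]).
  exists (fun x => 1 - p (f x)); split => //; split => // x.
  by have := p01 (f x); move=> /andP[? ?]; apply/andP; split; lra.
have dis : ((p \o f) @^-1` [set 0]) `&` ((fun x => 1 - p (f x)) @^-1` [set 0]) = set0.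
  apply/seteqP; split => // x [/= ->]; rewrite subr0 => /eqP; rewrite oner_eq0.
  by [].
have [L|L] := HI _ _ zA zB dis; [left|right].
  apply: lind_closed_sub L _ _.
    by apply: preimage_closed => // x _; apply: cf.
  by move=> x Cx; apply: pC; exists (f x).
apply: lind_closed_sub L _ _.
  by apply: preimage_closed => // x _; apply: cf.
move=> x Dx /=; rewrite (pD (p (f x))) ?subrr //; by exists (f x).
Qed.


Lemma P2_P1 (R : realType) (X : topologicalType) : EC_all_metric R X -> EC X R.
Proof. by move=> H; apply: (H R (@Rhausdorff R)). Qed.

Lemma P3b_P3a (R : realType) (X : topologicalType) :
  zero_sets_meet_nonlindelof R X -> I0 R X.
Proof.
move=> H A B zA zB AB; apply: contrapT => /not_orP[nA nB].
by apply: (H A B zA zB nA nB); rewrite AB; apply: lind0.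
Qed.

Lemma P4b_P4a (X : topologicalType) : closed_sets_meet_nonlindelof X -> IC X.
Proof.
move=> H A B cA cB AB; apply: contrapT => /not_orP[nA nB].
by apply: (H A B cA cB nA nB); rewrite AB; apply: lind0.
Qed.

Lemma P4a_P4b (X : topologicalType) : IC X -> closed_sets_meet_nonlindelof X.
Proof.
move=> HIC A B cA cB nA nB LK.
apply: nA => I U oU AU; apply: contrapT => nJA.
apply: nB => I' V oV BV; apply: contrapT => nJB.
have [J1 [cJ1 KJ1]] := LK I U oU (subset_trans (@subIsetl _ A B) AU).
have [J2 [cJ2 KJ2]] := LK I' V oV (subset_trans (@subIsetr _ A B) BV).
pose O := (\bigcup_(i in J1) U i) `&` (\bigcup_(i in J2) V i).
have oO : open O.
  by apply: openI; apply: bigcup_open => i _; [apply: oU|apply: oV].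
have cA' : closed (A `&` ~` O) by apply: closedI => //; apply: open_closedC.
have cB' : closed (B `&` ~` O) by apply: closedI => //; apply: open_closedC.
have dis : (A `&` ~` O) `&` (B `&` ~` O) = set0.
  apply/seteqP; split => // x [[Ax nO] [Bx _]]; apply: nO.
  by split; [apply: KJ1|apply: KJ2].
have [L|L] := HIC _ _ cA' cB' dis.
  have [J3 [cJ3 AJ3]] := L I U oU (subset_trans (@subIsetl _ A _) AU).
  apply: nJA; exists (J1 `|` J3); split; first exact: cnt_U.
  move=> x Ax; have [Ox|nOx] := pselect (O x).
    by have [i Ji Ui] := Ox.1; exists i => //; left.
  by have [i Ji Ui] := AJ3 x (conj Ax nOx); exists i => //; right.
have [J3 [cJ3 BJ3]] := L I' V oV (subset_trans (@subIsetl _ B _) BV).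
apply: nJB; exists (J2 `|` J3); split; first exact: cnt_U.
move=> x Bx; have [Ox|nOx] := pselect (O x).
  by have [i Ji Vi] := Ox.2; exists i => //; left.
by have [i Ji Vi] := BJ3 x (conj Bx nOx); exists i => //; right.
Qed.

Lemma P4a_P3b (R : realType) (X : topologicalType) : IC X ->
  zero_sets_meet_nonlindelof R X.
Proof.
move=> /P4a_P4b H A B zA zB; apply: H; [exact: (zero_set_closed zA)|exact: (zero_set_closed zB)].
Qed.

Lemma P3a_P4a (R : realType) (X : topologicalType) : normal_space X -> I0 R X -> IC X.
Proof.
move=> nX HI A B cA cB AB.
exact: (@sepL R X X id A B HI nX (fun x => cvg_id) cA cB AB).
Qed.


Lemma split_uncountable T (D : set T) : ~ countable D ->
  exists E, E `<=` D /\ ~ countable E /\ ~ countable (D `\` E).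
Proof.
move=> nD.
pose P := [set M : set (T * T) | (forall p, M p -> [/\ D p.1, D p.2 & p.1 <> p.2]) /\
  (forall p q, M p -> M q -> (p.1 = q.1 \/ p.1 = q.2 \/ p.2 = q.1 \/ p.2 = q.2) -> p = q)].
have [M [[MD Mdis] Mmax]] : exists M, P M /\ forall B, M `<` B -> ~ P B.
  apply: Zorn_bigcup => F FP Ftot; split.
    by move=> p [X FX Xp]; apply: (proj1 (FP X FX)).
  move=> p q [X1 F1 X1p] [X2 F2 X2q].
  have [S12|S21] := Ftot _ _ F1 F2.
    by apply: (proj2 (FP X2 F2)) => //; apply: S12.
  by apply: (proj2 (FP X1 F1)) => //; apply: S21.
pose S := fst @` M `|` snd @` M.
have rest a b : D a -> D b -> ~ S a -> ~ S b -> a = b.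
  move=> Da Db nSa nSb; apply: contrapT => nab.
  apply: (Mmax (M `|` (set1 (a, b)))).
    split; first by move=> p Mp; left.
    move=> /(_ (a, b) (or_intror erefl)) Mab.
    by apply: nSa; left; exists (a, b).
  split.
    move=> p [/MD //|->]; split => //; exact: nab.
  have nSa' p : M p -> ~ (p.1 = a \/ p.2 = a).
    by move=> Mp [pa|pa]; apply: nSa; rewrite -pa; [left|right]; exists p.
  have nSb' p : M p -> ~ (p.1 = b \/ p.2 = b).
    by move=> Mp [pa|pa]; apply: nSb; rewrite -pa; [left|right]; exists p.
  move=> p q [Mp|->] [Mq|->] /=.
  - exact: Mdis.
  - move=> H; exfalso; case: H => [?|[?|[?|?]]].
    + by apply: (nSa' p Mp); left.
    + by apply: (nSb' p Mp); left.
    + by apply: (nSa' p Mp); right.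
    + by apply: (nSb' p Mp); right.
  - move=> H; exfalso; case: H => [?|[?|[?|?]]].
    + by apply: (nSa' q Mq); left.
    + by apply: (nSa' q Mq); right.
    + by apply: (nSb' q Mq); left.
    + by apply: (nSb' q Mq); right.
  - by [].
have hex (sel : T * T -> T) : (forall p q, M p -> M q -> sel p = sel q -> p = q) ->
    exists h : T -> T * T, M `<=` h @` (sel @` M).
  move=> selI.
  have H a : exists p : T * T, (exists2 q, M q & sel q = a) -> M p /\ sel p = a.
    have [[q Mq qa]|nq] := pselect (exists2 q, M q & sel q = a).
      by exists q.
    by exists (a, a).
  have [h Hh] := choice H; exists h => p Mp; exists (sel p); first by exists p.
  have [Mh sh] := Hh (sel p) (ex_intro2 _ _ p Mp erefl).
  by apply: selI.
have [h1 Mh1] : exists h : T -> T * T, M `<=` h @` (fst @` M).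
  by apply: hex => p q Mp Mq pq; apply: Mdis => //; left.
have [h2 Mh2] : exists h : T -> T * T, M `<=` h @` (snd @` M).
  by apply: hex => p q Mp Mq pq; apply: Mdis => //; right; right; right.
have cED : countable (fst @` M) -> countable D.
  move=> cE.
  have cM : countable M by apply: cnt_sub Mh1 _; apply: cnt_img.
  have cS : countable S by apply: cnt_U; apply: cnt_img.
  have cR : countable (D `\` S).
    have [[a [Da nSa]]|na] := pselect (exists a, (D `\` S) a).
      apply: (@cnt_sub _ _ [set a]) => // b [Db nSb].
      by apply: (rest b a).
    by apply: (@cnt_sub _ _ set0); [move=> b Db; apply: na; exists b|exact: countable0].
  apply: (@cnt_sub _ _ (S `|` (D `\` S))); last exact: cnt_U.
  by move=> a Da; have [Sa|nSa] := pselect (S a); [left|right].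
exists (fst @` M); split.
  by move=> _ [p Mp <-]; have [] := MD p Mp.
split; first by move=> /cED.
move=> cDE.
have sub2 : snd @` M `<=` D `\` fst @` M.
  move=> _ [q Mq <-]; have [_ Dq nq] := MD q Mq; split => //.
  move=> [p Mp pq]; have pq' := Mdis p q Mp Mq (or_intror (or_introl pq)).
  by apply: nq; rewrite -pq pq'.
have cM : countable M by apply: cnt_sub Mh2 _; apply: cnt_img; apply: cnt_sub sub2 cDE.
by apply: nD; apply: cED; apply: cnt_img.
Qed.


Lemma ball_int (R : realType) (Y : pseudoMetricType R) (x : Y) (e : R) :
  0 < e -> ball x e `<=` (ball x (2 * e))°.
Proof.
move=> e0 z bz; rewrite /interior /=; apply/nbhs_ballP; exists e => // w bw.
by apply: (le_ball _ (ball_triangle bz bw)); lra.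
Qed.

Section Main.
Context (R : realType) (X : topologicalType) (Y : pseudoMetricType R)
  (f : X -> Y) (cf : continuous f) (HI : I0 R X) (nL : ~ lindelof [set: X]).

Lemma claim_eps (d : R) : 0 < d ->
  exists y, lindelof (f @^-1` ~` (ball y (8 * d))°).
Proof.
move=> d0; apply: contrapT => nex.
have H y : ~ lindelof (f @^-1` ~` (ball y (8 * d))°).
  by move=> L; apply: nex; exists y.
have Lb y : lindelof (f @^-1` closure (ball y (2 * d))).
  have dis : ~` (ball y (8 * d))° `&` closure (ball y (2 * d)) = set0.
    apply/seteqP; split => // z [nz cz].
    have [w [bw bzw]] := cz _ (nbhsx_ballx z (2 * d) (ltac:(lra))).
    have byz : ball y (4 * d) z.
      apply: (le_ball _ (ball_triangle bw (ball_sym bzw))); lra.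
    apply: nz; have -> : 8 * d = 2 * (4 * d) by lra.
    by apply: ball_int => //; lra.
  have [L|L] := sepL HI (@pseudometric_normal R Y) cf
    (open_closedC (@open_interior _ _)) (@closed_closure _ _) dis.
    by case: (H y).
  exact: L.
pose P := [set D : set Y | D `<=` range f /\
  (forall a b, D a -> D b -> a <> b -> ~ ball a (2 * d) b)].
have [D [[Dr Dsep] Dmax]] : exists D, P D /\ forall B, D `<` B -> ~ P B.
  apply: Zorn_bigcup => F FP Ftot; split.
    by move=> p [Z FZ Zp]; apply: (proj1 (FP Z FZ)).
  move=> a b [Z1 F1 Z1a] [Z2 F2 Z2b].
  have [S12|S21] := Ftot _ _ F1 F2.
    by apply: (proj2 (FP Z2 F2)) => //; apply: S12.
  by apply: (proj2 (FP Z1 F1)) => //; apply: S21.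
have cover x : exists2 a, D a & ball a (2 * d) (f x).
  apply: contrapT => nx.
  apply: (Dmax (D `|` set1 (f x))).
    split; first by move=> p Dp; left.
    move=> /(_ (f x) (or_intror erefl)) Dfx.
    by apply: nx; exists (f x) => //; apply: ballxx; lra.
  split.
    by move=> p [/Dr //|->]; exists x.
  move=> a b [Da|->] [Db|->] ab.
  - exact: Dsep.
  - by move=> bafx; apply: nx; exists a.
  - by move=> bfxb; apply: nx; exists b => //; apply: ball_sym.
  - by [].
have nonL (E : set Y) : E `<=` D -> ~ countable E ->
    ~ lindelof (f @^-1` closure E).
  move=> ED nE L.
  pose U (a : Y) := f @^-1` (ball a d)°.
  have oU a : open (U a).
    by apply: open_comp; [move=> x _; apply: cf|apply: open_interior].
  have [|J [cJ EJ]] := L Y U oU.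
    move=> x cEx.
    have [a [Ea ba]] := cEx _ (nbhsx_ballx (f x) (d / 2) (ltac:(lra))).
    exists a => //; rewrite /U /=.
    have -> : d = 2 * (d / 2) by lra.
    by apply: ball_int; [lra|apply: ball_sym].
  have Hg j : exists a, (exists2 b, E b & ball j d b) -> E a /\ ball j d a.
    have [[b Eb bb]|nb] := pselect (exists2 b, E b & ball j d b).
      by exists b.
    by exists j.
  have [g Hg'] := choice Hg.
  apply: nE; apply: (@cnt_sub _ _ (g @` J)); last exact: cnt_img.
  move=> a Ea; have [x _ fxa] := Dr a (ED a Ea).
  have [j Jj Ujx] := EJ x (@subset_closure _ E (f x) (eq_ind_r E Ea fxa)).
  have bja : ball j d a by rewrite -fxa; apply: interior_subset.
  have [Egj bgj] := Hg' j (ex_intro2 _ _ a Ea bja).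
  exists j => //; apply: contrapT => ne.
  apply: (Dsep _ _ (ED _ Egj) (ED _ Ea) ne).
  apply: (le_ball _ (ball_triangle (ball_sym bgj) bja)); lra.
have [cD|ncD] := pselect (countable D).
  apply: nL; apply: (lind_closed_sub (lind_bigcup cD (fun a _ => Lb a)) closedT).
  move=> x _; have [a Da ba] := cover x; exists a => //.
  exact: subset_closure.
have [E1 [E1D [nE1 nE2]]] := split_uncountable ncD.
have dis : closure E1 `&` closure (D `\` E1) = set0.
  apply/seteqP; split => // z [c1 c2].
  have [a [E1a ba]] := c1 _ (nbhsx_ballx z d d0).
  have [b [[Db nE1b] bb]] := c2 _ (nbhsx_ballx z d d0).
  have ab : a <> b by move=> eab; apply: nE1b; rewrite -eab.
  apply: (Dsep _ _ (E1D _ E1a) Db ab).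
  apply: (le_ball _ (ball_triangle (ball_sym ba) bb)); lra.
have [L|L] := sepL HI (@pseudometric_normal R Y) cf
  (@closed_closure _ _) (@closed_closure _ _) dis.
  exact: (nonL E1 E1D nE1 L).
by apply: (nonL (D `\` E1) _ nE2 L) => a [].
Qed.

Lemma main_EC (hY : hausdorff_space Y) :
  exists Z : set X, lindelof Z /\ exists y : Y, f @` (~` Z) = [set y].
Proof.
pose dl (n : nat) : R := n.+1%:R^-1 / 16.
have dl0 n : 0 < dl n by rewrite /dl divr_gt0 // invr_gt0.
have [yn Hyn] := choice (fun n => claim_eps (dl0 n)).
pose Z := \bigcup_(n in [set: nat]) f @^-1` ~` (ball (yn n) (8 * dl n))°.
have LZ : lindelof Z by apply: lind_bigcup; [exact: countableP|move=> n _; apply: Hyn].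
have [xs nZxs] : exists x, ~ Z x.
  apply: contrapT => nex; apply: nL.
  apply: (lind_closed_sub LZ closedT) => x _; apply: contrapT => nZx.
  by apply: nex; exists x.
pose y := f xs.
have yin n : ball (yn n) (8 * dl n) y.
  apply: interior_subset; apply: contrapT => nb; apply: nZxs.
  by exists n.
pose W := \bigcup_(n in [set: nat]) f @^-1` ~` (ball y (16 * dl n))°.
exists W; split.
  apply: lind_bigcup; first exact: countableP.
  move=> n _; apply: (lind_closed_sub (Hyn n)).
    apply: preimage_closed; first by move=> x _; apply: cf.
    exact: (open_closedC (@open_interior _ _)).
  have sub : ball (yn n) (8 * dl n) `<=` ball y (16 * dl n).
    move=> z bz; apply: (le_ball _ (ball_triangle (ball_sym (yin n)) bz)); lra.
  move=> x /= nx nx'; apply: nx; exact: (interiorS sub nx').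
exists y; apply/seteqP; split.
  move=> _ [x nWx <-] /=.
  have bx n : ball y (16 * dl n) (f x).
    apply: interior_subset; apply: contrapT => nb; apply: nWx; by exists n.
  apply/esym/(close_eq hY); rewrite ball_close => eps.
  have [N _ HN] := near_infty_natSinv_lt eps.
  have := HN N (leqnn N); move=> lt.
  apply: (le_ball _ (bx N)); rewrite /dl; move: lt; set r := (N.+1%:R)^-1; move=> lt; lra.
move=> _ ->; exists xs => //.
move=> [n _ /= nb]; apply: nb; rewrite /interior /=.
by apply: nbhsx_ballx; apply: mulr_gt0.
Qed.

End Main.

Lemma P3a_P2 (R : realType) (X : topologicalType) : I0 R X -> EC_all_metric R X.
Proof.
move=> HI Y hY; have [L|nL] := pselect (lindelof [set: X]); first by left.
by right => f cf; apply: main_EC.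
Qed.

Unset Implicit Arguments.

Theorem theorem3p3 (R : realType) (X : topologicalType) (hX : hausdorff_space X) :
  let P1 := EC X R in
  let P2 := EC_all_metric R X in
  let P3a := I0 R X in
  let P3b := zero_sets_meet_nonlindelof R X in
  let P4a := IC X in
  let P4b := closed_sets_meet_nonlindelof X in
  ((P1 <-> P2) /\ (P2 <-> P3a) /\ (P3b -> P3a) /\ (P4a -> P3b) /\ (P4a <-> P4b)) /\
  (tychonoff_space R X -> (P3a <-> P3b)) /\
  (normal_space X -> (P1 <-> P4a) /\ (P1 <-> P3b) /\ (P1 <-> P4b)).
Proof.
cbv zeta.
have a := @P1_I0 R X; have b := @P3a_P2 R X; have c := @P2_P1 R X.
have d := @P3b_P3a R X; have e := @P4a_P3b R X; have g := @P4a_P4b X.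
have h := @P4b_P4a X; have k := @P1_P3b R X; have n := @P3a_P4a R X.
split; [split; [|split; [|split; [|split]]]|split].
- by split; [move/a/b|exact: c].
- by split; [move/c/a|exact: b].
- exact: d.
- exact: e.
- by split; [exact: g|exact: h].
- by move=> _; split; [move/b/c/k|exact: d].
- move=> nX; split; [|split].
  + by split; [move/a/(n nX)|move/e/d/b/c].
  + by split; [exact: k|move/d/b/c].
  + by split; [move/a/(n nX)/g|move/h/e/d/b/c].
Qed.
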